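(* Let $\Gamma$ be a trivalent graph. The semigroup $BZ_\Gamma(SL_2(\mathbb{C}))$ is generated by those weightings $w:E(\Gamma)\to\mathbb{Z}_{\ge0}$ in it with $w(e)\le2$ for all $e\in E(\Gamma)$.
   Context: $BZ_\Gamma(SL_2(\mathbb{C}))$ is the additive semigroup of weightings $w:E(\Gamma)\to\mathbb{Z}_{\ge0}$ such that at every vertex $v$, with incident edges $e,f,g$ (counted with multiplicity), one has $|w(e)-w(f)|\le w(g)\le w(e)+w(f)$ and $w(e)+w(f)+w(g)\in2\mathbb{Z}$. *)

(* Defs.v *)
From mathcomp Require Import all_boot.
Set Implicit Arguments. Unset Strict Implicit. Unset Printing Implicit Defensive.

(* A trivalent graph (loops and multiple edges allowed): finite vertex type V,
   finite edge type E, and for each vertex v the 3-tuple of edges incident to v,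
   counted with multiplicity (a loop at v occurs twice in [inc v]). *)
Record trivalent_graph := TrivalentGraph {
  tg_V : finType;
  tg_E : finType;
  tg_inc : tg_V -> 3.-tuple tg_E;
  tg_ends : forall e : tg_E, \sum_(v : tg_V) count_mem e (tg_inc v) = 2
}.

Definition bz_vertex (a b c : nat) : bool :=
  [&& a - b <= c, b - a <= c, c <= a + b & ~~ odd (a + b + c)].

Definition BZ (G : trivalent_graph) (w : tg_E G -> nat) : bool :=
  [forall v : tg_V G,
     bz_vertex (w (tnth (tg_inc v) ord0))
               (w (tnth (tg_inc v) (inord 1)))
               (w (tnth (tg_inc v) (inord 2)))].

(* Main.v *)
Require Import Defs.
From mathcomp Require Import all_boot zify.
Set Implicit Arguments. Unset Strict Implicit. Unset Printing Implicit Defensive.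

Definition i0 : 'I_3 := ord0.
Definition i1 : 'I_3 := @Ordinal 3 1 isT.
Definition i2 : 'I_3 := @Ordinal 3 2 isT.

Lemma ord3 (i : 'I_3) : i = i0 \/ i = i1 \/ i = i2.
Proof.
case: i => [[|[|[|n]]] Hn].
- by left; apply: val_inj.
- by right; left; apply: val_inj.
- by right; right; apply: val_inj.
- by [].
Qed.


Lemma ineq10 : (i1 == i0) = false. Proof. by []. Qed.
Lemma ineq01 : (i0 == i1) = false. Proof. by []. Qed.
Lemma ineq20 : (i2 == i0) = false. Proof. by []. Qed.
Lemma ineq02 : (i0 == i2) = false. Proof. by []. Qed.
Lemma ineq12 : (i1 == i2) = false. Proof. by []. Qed.
Lemma ineq21 : (i2 == i1) = false. Proof. by []. Qed.

Lemma inord1 : inord 1 = i1 :> 'I_3. Proof. by apply: val_inj; rewrite /= inordK. Qed.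
Lemma inord2 : inord 2 = i2 :> 'I_3. Proof. by apply: val_inj; rewrite /= inordK. Qed.

Lemma bz_of x y z : bz_vertex (y + z) (x + z) (x + y).
Proof.
rewrite /bz_vertex; apply/and4P; split; lia.
Qed.

Lemma bz_corners a b c : bz_vertex a b c -> exists x y z, [/\ a = y + z, b = x + z & c = x + y].
Proof.
case/and4P => h1 h2 h3 h4.
have := odd_double_half (a + b + c); rewrite (negbTE h4) add0n -addnn => hd.
set n := (a + b + c)./2 in hd.
exists (n - a), (n - b), (n - c); split; lia.
Qed.

Lemma half_lem x y z : ((y + z) + (x + z) - (x + y))./2 = z.
Proof. have -> : (y + z) + (x + z) - (x + y) = z.*2 by rewrite -addnn; lia. exact: doubleK. Qed.

Section Graph.
Variable G : trivalent_graph.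
Notation V := (tg_V G).
Notation E := (tg_E G).
Definition H := (V * 'I_3)%type.
Definition ed (h : H) : E := tnth (tg_inc h.1) h.2.

Lemma sum_ed (e : E) : \sum_(h : H) (ed h == e) = 2.
Proof.
transitivity (\sum_(v : V) count_mem e (tg_inc v)); last exact: tg_ends.
transitivity (\sum_(v : V) \sum_(i : 'I_3) ((ed (v, i) == e) : nat)).
  by rewrite pair_bigA; apply: eq_bigr => -[v i].
apply: eq_bigr => v _.
rewrite -(map_tnth_enum (tg_inc v)) count_map -sum1_count.
rewrite /index_enum /= -enumT.
rewrite [RHS]big_mkcond /=; apply: congr_big => // i _; rewrite /ed /=; by case: ifP => ->.
Qed.

Definition sig (h : H) : H := odflt h [pick h' | (h' != h) && (ed h' == ed h)].

Lemma sig_spec h : (sig h != h) && (ed (sig h) == ed h).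
Proof.
rewrite /sig; case: pickP => [x -> //|none].
have := sum_ed (ed h); rewrite (bigD1 h) //= eqxx big1 // => x xh.
by have := none x; rewrite xh /= => ->.
Qed.

Lemma sig_neq h : sig h != h. Proof. by case/andP: (sig_spec h). Qed.
Lemma sig_ed h : ed (sig h) = ed h. Proof. by case/andP: (sig_spec h) => _ /eqP. Qed.

Lemma ed_eq h x : ed x = ed h -> x = h \/ x = sig h.
Proof.
move=> exh; case: (eqVneq x h) => [->|xh]; first by left.
case: (eqVneq x (sig h)) => [->|xs]; first by right.
have := sum_ed (ed h); rewrite (bigD1 h) //= eqxx (bigD1 (sig h)) /= ?sig_neq //.
rewrite sig_ed eqxx (bigD1 x) /= ?xh ?xs // exh eqxx.
by rewrite !add1n.
Qed.

Lemma sigK h : sig (sig h) = h.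
Proof.
case: (@ed_eq (sig h) h) => [|/esym/eqP|//]; first by rewrite sig_ed.
  by rewrite (negbTE (sig_neq h)).
Qed.


Lemma count_add4 (T : Type) (P a b c d : pred T) (s : seq T) :
  all P s -> (forall x, P x -> a x + b x = c x + d x) ->
  count a s + count b s = count c s + count d s.
Proof.
move=> hP hs; elim: s hP => //= x s IH /andP[px ps].
have := hs x px; have := IH ps; lia.
Qed.

Definition trs (W : seq H) := zip W (rot 1 W).
Definition valid (p : H * H) := ((sig p.1).1 == p.2.1) && ((sig p.1).2 != p.2.2).
Definition cornerP (v : V) (i j : 'I_3) (p : H * H) :=
  [&& (sig p.1).1 == v, p.2.1 == v &
      ((((sig p.1).2 == i) && (p.2.2 == j)) || (((sig p.1).2 == j) && (p.2.2 == i)))].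
Definition U W (v : V) (i j : 'I_3) := count (cornerP v i j) (trs W).
Definition uW W (e : E) := count (fun h => ed h == e) W.

Lemma pt_id (p : H * H) (v : V) (i j k : 'I_3) :
  (i, j, k) \in [:: (i0, i1, i2); (i1, i0, i2); (i2, i0, i1)] -> valid p ->
  (p.2 == (v, i)) + (sig p.1 == (v, i)) = cornerP v i j p + cornerP v i k p.
Proof.
rewrite /valid /cornerP; case: p => x [vb ib] /=.
case: (sig x) => va ia /= hijk /andP[/eqP <- hab].
rewrite !xpair_eqE.
case hv: (_ == v); last by [].
move/eqP: hv => hv; subst va; rewrite /=.
move: hijk hab; rewrite !inE !xpair_eqE.
case: (ord3 ia) => [->|[->|->]]; case: (ord3 ib) => [->|[->|->]];
  by case/or3P => /andP[/andP[/eqP -> /eqP ->] /eqP ->].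
Qed.

Lemma uW_ed W h : uW W (ed h) = count (pred1 h) W + count (pred1 (sig h)) W.
Proof.
rewrite /uW -count_predUI.
have -> : count (predI (pred1 h) (pred1 (sig h))) W = 0.
  apply/eqP; rewrite eqn0Ngt -has_count; apply/hasPn => x _ /=.
  by apply/andP => -[/eqP -> /eqP e]; move: (sig_neq h); rewrite -e eqxx.
rewrite addn0; apply: eq_count => x /=.
case: (eqVneq x h) => [->|xh]; first by rewrite eqxx.
case: (eqVneq x (sig h)) => [->|xs]; first by rewrite sig_ed eqxx.
by apply/eqP => /ed_eq [] /eqP; rewrite ?(negbTE xh) ?(negbTE xs).
Qed.

Lemma count_dep W h : count (pred1 h) W = count (fun p => p.2 == h) (trs W).
Proof.
rewrite /trs -(count_map snd (pred1 h)) -/(unzip2 _) unzip2_zip ?size_rot //.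
by apply/permP; rewrite perm_sym perm_rot perm_refl.
Qed.

Lemma count_arr W h : count (pred1 (sig h)) W = count (fun p => sig p.1 == h) (trs W).
Proof.
rewrite /trs -(count_map fst (fun x => sig x == h)) -/(unzip1 _) unzip1_zip ?size_rot //.
apply: eq_count => x /=; apply/eqP/eqP => [->|<-]; by rewrite sigK.
Qed.

Lemma U_sym W v i j : U W v i j = U W v j i.
Proof. by apply: eq_count => p; rewrite /cornerP orbC. Qed.

Lemma uW_corner W (v : V) (i j k : 'I_3) :
  (i, j, k) \in [:: (i0, i1, i2); (i1, i0, i2); (i2, i0, i1)] -> all valid (trs W) ->
  uW W (ed (v, i)) = U W v i j + U W v i k.
Proof.
move=> hijk hv; rewrite uW_ed count_dep count_arr /U.
apply: (count_add4 hv) => p vp; exact: pt_id.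
Qed.

Lemma ed_surj e : exists h, ed h = e.
Proof.
case: (pickP (fun h => ed h == e)) => [h /eqP <-|none]; first by exists h.
by have := sum_ed e; rewrite big1 // => h _; rewrite none.
Qed.

Lemma bz_eq a b c x y z : a = y + z -> b = x + z -> c = x + y -> bz_vertex a b c.
Proof. by move=> -> -> ->; exact: bz_of. Qed.


Lemma nth_rot1 (T : Type) (x0 : T) (s : seq T) k : k < size s ->
  nth x0 (rot 1 s) k = nth x0 s (if k.+1 < size s then k.+1 else 0).
Proof.
case: s => [|y t] //= hk; rewrite rot1_cons nth_rcons.
case: ifP => hk1 /=; first by rewrite ltnS hk1.
have -> : k = size t by lia.
by rewrite eqxx ltnn.
Qed.

Lemma count_dt (T : Type) (a : pred T) (s : seq T) i j :
  count a (drop i (take j s)) <= count a s.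
Proof.
rewrite -{2}(cat_take_drop j s) count_cat.
rewrite -{2}(cat_take_drop i (take j s)) count_cat; lia.
Qed.

Lemma trs_dt (W : seq H) i j x0 : i < j -> j < size W -> nth x0 W i = nth x0 W j ->
  trs (drop i (take j W)) = drop i (take j (trs W)).
Proof.
move=> ij jW eq; rewrite /trs.
apply: (@eq_from_nth _ (x0, x0)).
  by rewrite size_zip size_rot minnn !size_drop !size_take size_zip size_rot minnn jW.
rewrite size_zip size_rot minnn size_drop size_take jW => m hm.
have L1 k : k < j - i -> nth x0 (drop i (take j W)) k = nth x0 W (i + k).
  by move=> hk; rewrite nth_drop nth_take //; lia.
have sz : size (drop i (take j W)) = j - i by rewrite size_drop size_take jW.
rewrite nth_drop nth_take; last by lia.
rewrite !nth_zip ?size_rot //.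
rewrite nth_rot1 ?sz // nth_rot1; last by lia.
rewrite L1 //; congr pair.
rewrite [X in _ = nth _ _ X]ifT; last by lia.
case: ifP => h1.
  by rewrite L1 //; congr nth; lia.
rewrite L1 ?addn0; last by lia.
by rewrite eq; congr nth; lia.
Qed.

Section Weights.
Variable w : E -> nat.
Definition av (v : V) (i : 'I_3) := w (ed (v, i)).
Definition c01 v := (av v i0 + av v i1 - av v i2)./2.
Definition c02 v := (av v i0 + av v i2 - av v i1)./2.
Definition c12 v := (av v i1 + av v i2 - av v i0)./2.

Lemma half2 n m : n = m + m -> n./2 = m.
Proof. by move=> ->; rewrite addnn doubleK. Qed.

Lemma BZ_av : BZ w -> forall v,
  [/\ av v i0 = c01 v + c02 v, av v i1 = c01 v + c12 v & av v i2 = c02 v + c12 v].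
Proof.
move=> /forallP hB v; move: (hB v); rewrite inord1 inord2 => /bz_corners [x [y [z [ha hb hc]]]].
have e01 : c01 v = z by apply: half2; rewrite /av /ed /= ha hb hc; lia.
have e02 : c02 v = y by apply: half2; rewrite /av /ed /= ha hb hc; lia.
have e12 : c12 v = x by apply: half2; rewrite /av /ed /= ha hb hc; lia.
rewrite e01 e02 e12 /av /ed /= ha hb hc; split; lia.
Qed.

Definition good W := [/\ W != [::], all valid (trs W) &
  forall v, [/\ U W v i0 i1 <= c01 v, U W v i0 i2 <= c02 v & U W v i1 i2 <= c12 v]].

Lemma uW_v W v : all valid (trs W) ->
  [/\ uW W (ed (v, i0)) = U W v i0 i1 + U W v i0 i2,
      uW W (ed (v, i1)) = U W v i0 i1 + U W v i1 i2 &
      uW W (ed (v, i2)) = U W v i0 i2 + U W v i1 i2].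
Proof.
move=> hv; split.
- by apply: uW_corner; rewrite ?inE ?eqxx.
- by rewrite (@uW_corner W v i1 i0 i2) ?inE ?eqxx ?orbT // U_sym.
- by rewrite (@uW_corner W v i2 i0 i1) ?inE ?eqxx ?orbT // (U_sym _ _ i2) (U_sym _ _ i2).
Qed.

Lemma good_BZ W : BZ w -> good W ->
  [/\ BZ (uW W), BZ (fun e => w e - uW W e) & forall e, uW W e <= w e].
Proof.
move=> hB [_ hv hd]; split.
- apply/forallP => v; rewrite inord1 inord2 -[ord0]/i0.
  case: (uW_v v hv) => h0 h1 h2.
  by apply: (bz_eq (x := U W v i1 i2) (y := U W v i0 i2) (z := U W v i0 i1));
    rewrite /ed /= in h0 h1 h2 *; lia.
- apply/forallP => v; rewrite inord1 inord2 -[ord0]/i0.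
  case: (uW_v v hv) => h0 h1 h2; case: (BZ_av hB v) => a0 a1 a2; case: (hd v) => d1 d2 d3.
  rewrite /av /ed /= in h0 h1 h2 a0 a1 a2 *.
  apply: (bz_eq (x := c12 v - U W v i1 i2) (y := c02 v - U W v i0 i2) (z := c01 v - U W v i0 i1)); lia.
- move=> e; case: (ed_surj e) => -[v i] <-.
  case: (uW_v v hv) => h0 h1 h2; case: (BZ_av hB v) => a0 a1 a2; case: (hd v) => d1 d2 d3.
  rewrite /av in a0 a1 a2.
  case: (ord3 i) => [->|[->|->]]; lia.
Qed.

Lemma good_split W : good W -> (exists e, 2 < uW W e) ->
  exists W', good W' /\ size W' < size W.
Proof.
move=> [hne hv hd] [e he].
have nu : ~~ uniq W.
  apply/negP => uW1; move: he; rewrite /uW -size_filter.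
  case: (ed_surj e) => h eh.
  have : size [seq x <- W | ed x == e] <= size [:: h; sig h].
    apply: uniq_leq_size; first exact: filter_uniq.
    move=> x; rewrite mem_filter => /andP[/eqP xe _].
    by rewrite !inE; case: (@ed_eq h x) => [|->|->]; rewrite ?eqxx ?orbT // xe.
  by move=> /= ?; lia.
clear he; case: W hne hv hd nu => [//|x0 W0] _ hv hd nu.
case/(uniqPn x0): nu => i [j [ij jW eq]].
exists (drop i (take j (x0 :: W0))); split; last first.
  by rewrite size_drop size_take jW; lia.
rewrite /good (trs_dt ij jW eq); split.
- rewrite -size_eq0 size_drop size_take jW; lia.
- apply/allP => p /mem_drop /mem_take hp; exact: (allP hv).
- move=> v; case: (hd v) => d1 d2 d3; rewrite /U (trs_dt ij jW eq); split.
  + apply: (leq_trans _ d1); exact: count_dt.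
  + apply: (leq_trans _ d2); exact: count_dt.
  + apply: (leq_trans _ d3); exact: count_dt.
Qed.

Lemma good_small W : good W -> exists W', good W' /\ forall e, uW W' e <= 2.
Proof.
have [n] := ubnP (size W); elim: n W => // n IH W sz g.
case: (boolP [exists e, 2 < uW W e]) => [/existsP ex|/existsPn nex].
  case: (good_split g ex) => W' [g' s']; apply: (IH W') => //; lia.
by exists W; split => // e; move: (nex e); rewrite ltnNge negbK.
Qed.

Section Slots.
Hypothesis hB : BZ w.

Definition tau_loc (v : V) (i : 'I_3) (j : nat) : 'I_3 * nat :=
  let z := c01 v in let y := c02 v in
  if i == i0 then (if j < z then (i1, j) else (i2, j - z))
  else if i == i1 then (if j < z then (i0, j) else (i2, y + (j - z)))
  else (if j < y then (i0, z + j) else (i1, z + (j - y))).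

Lemma tl_ok v i j : j < av v i ->
  [/\ (tau_loc v i j).2 < av v (tau_loc v i j).1, (tau_loc v i j).1 != i &
      tau_loc v (tau_loc v i j).1 (tau_loc v i j).2 = (i, j)].
Proof.
case: (BZ_av hB v) => a0 a1 a2.
rewrite /tau_loc; case: (ord3 i) => [->|[->|->]] /= hj.
- case: ifP => hz /=.
  + by rewrite hz a1; split => //; lia.
  + rewrite a2; split => //; first lia.
    by rewrite ifT; [congr pair; lia | lia].
- case: ifP => hz /=.
  + by rewrite hz a0; split => //; lia.
  + rewrite a2; split => //; first lia.
    by rewrite ifF; [congr pair; lia | lia].
- case: ifP => hz /=.
  + rewrite a0; split => //; first lia.
    by rewrite ifF; [congr pair; lia | lia].
  + rewrite a1; split => //; first lia.
    by rewrite ifF; [congr pair; lia | lia].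
Qed.

Definition N := \max_(e : E) w e.
Definition Slot := (H * 'I_N.+1)%type.
Definition vs (s : Slot) := val s.2 < w (ed s.1).
Definition sS (s : Slot) : Slot := (sig s.1, s.2).
Definition tau (s : Slot) : Slot :=
  if vs s then ((s.1.1, (tau_loc s.1.1 s.1.2 (val s.2)).1), inord (tau_loc s.1.1 s.1.2 (val s.2)).2)
  else s.
Definition fS s := tau (sS s).

Lemma vs_sS s : vs (sS s) = vs s. Proof. by rewrite /vs /sS /= sig_ed. Qed.
Lemma sSK s : sS (sS s) = s. Proof. by rewrite /sS /= sigK; case: s. Qed.
Lemma sS_neq s : sS s != s.
Proof. by case: s => h j; rewrite /sS xpair_eqE (negbTE (sig_neq h)). Qed.

Lemma tau_props s : vs s ->
  [/\ vs (tau s), tau (tau s) = s, (tau s).1.1 = s.1.1 & (tau s).1.2 != s.1.2].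
Proof.
case: s => [[v i] j] hv; rewrite /tau hv /=.
have := tl_ok (i := i) (j := val j) hv.
case: (tau_loc v i j) => i' j' /= [h1 h2 h3].
have hN : j' < N.+1.
  apply: leq_trans h1 _; apply: leq_trans (leq_bigmax (ed (v, i'))) _; exact: leqnSn.
have hv' : vs ((v, i'), inord j') by rewrite /vs /= inordK.
split => //; rewrite hv' /= inordK // h3 /=.
by rewrite inord_val.
Qed.

Lemma tauK s : tau (tau s) = s.
Proof.
case: (boolP (vs s)) => hv; first by case: (tau_props hv).
by rewrite /tau (negbTE hv) (negbTE hv).
Qed.

Lemma fS_inj : injective fS.
Proof.
move=> x y /(congr1 tau); rewrite !tauK => /(congr1 sS); by rewrite !sSK.
Qed.

Lemma vs_iter n s : vs s -> vs (iter n fS s).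
Proof.
move=> hs; elim: n => //= n IH; rewrite /fS.
by case: (tau_props (s := sS (iter n fS s))); rewrite ?vs_sS.
Qed.

Definition gS s := sS (tau s).

Lemma sS_iter n t : sS (iter n fS t) = iter n gS (sS t).
Proof. elim: n => //= n <-; by []. Qed.

Lemma gf_iter n t : iter n gS (iter n fS t) = t.
Proof.
have gf x : gS (fS x) = x by rewrite /gS /fS tauK sSK.
elim: n => // n IH; by rewrite [iter n.+1 fS t]iterS [iter n.+1 gS _]iterSr gf.
Qed.

Lemma no_rev n t : vs t -> iter n fS t != sS t.
Proof.
move=> ht; apply/eqP => hn.
have := odd_double_half n; rewrite -addnn; set m := n./2; case: (odd n) => /= hm.
-
  have e : sS (iter m fS t) = iter m.+1 fS t.
    have en : n = m + m.+1 by move: hm; lia.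
    by rewrite sS_iter -hn en iterD gf_iter.
  case: (tau_props (s := sS (iter m fS t))); first by rewrite vs_sS vs_iter.
  move=> _ _ _; rewrite -[tau _]/(fS (iter m fS t)) -iterS -e eqxx //.
-
  have e : sS (iter m fS t) = iter m fS t.
    have en : n = m + m by move: hm; lia.
    by rewrite sS_iter -hn en iterD gf_iter.
  by move: (sS_neq (iter m fS t)); rewrite e eqxx.
Qed.

Lemma tau_ranges a : vs a ->
  let v := a.1.1 in let b := tau a in
  ((a.1.2 == i0) && (b.1.2 == i1) -> val a.2 < c01 v) /\
  ((a.1.2 == i1) && (b.1.2 == i0) -> val b.2 < c01 v) /\
  ((a.1.2 == i0) && (b.1.2 == i2) -> c01 v <= val a.2 < c01 v + c02 v) /\
  ((a.1.2 == i2) && (b.1.2 == i0) -> c01 v <= val b.2 < c01 v + c02 v) /\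
  ((a.1.2 == i2) && (b.1.2 == i1) -> c02 v <= val a.2 < c02 v + c12 v) /\
  ((a.1.2 == i1) && (b.1.2 == i2) -> c02 v <= val b.2 < c02 v + c12 v).
Proof.
case: a => [[v i] j] hv; rewrite /=.
have := tl_ok (i := i) (j := val j) hv.
have hv' := hv; rewrite /vs /= in hv'.
case: (BZ_av hB v) => a0 a1 a2.
rewrite /tau hv /=.
case e: (tau_loc v i j) => [i' j'] /= [h1 h2 h3].
have hN : j' < N.+1.
  apply: leq_trans h1 _; apply: leq_trans (leq_bigmax (ed (v, i'))) _; exact: leqnSn.
rewrite inordK //.
move: e hv'; rewrite /tau_loc; rewrite /av in a0 a1 a2.
case: (ord3 i) => [->|[->|->]] /=; case: ifP => hz [<- <-] /= hv';
  (do ! split) => //= *; lia.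
Qed.

Lemma map_traject (T : Type) (f : T -> T) x n : map f (traject f x n) = traject f (f x) n.
Proof. by elim: n x => //= n IH x; rewrite IH. Qed.

Lemma count_inj (T : eqType) (P : pred T) (l : T -> T) (Orb L : seq T) :
  uniq Orb -> (forall x y, x \in Orb -> y \in Orb -> P x -> P y -> l x = l y -> x = y) ->
  (forall x, x \in Orb -> P x -> l x \in L) -> count P Orb <= size L.
Proof.
move=> uO inj sub; rewrite -size_filter -(size_map l).
apply: uniq_leq_size.
  rewrite map_inj_in_uniq ?filter_uniq // => x y.
  rewrite !mem_filter => /andP[px xo] /andP[py yo]; exact: inj.
by move=> z /mapP[x]; rewrite mem_filter => /andP[px xo] ->; exact: sub.
Qed.

Variable s0 : Slot.
Hypothesis hs0 : vs s0.
Definition Orb := orbit fS s0.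

Lemma inO x : x \in Orb -> vs x /\ fconnect fS s0 x.
Proof.
rewrite /Orb -fconnect_orbit => hc; split => //.
by rewrite -(iter_findex hc); exact: vs_iter.
Qed.

Lemma fS_O x : x \in Orb -> fS x \in Orb.
Proof.
case/inO => _ hc; rewrite /Orb -fconnect_orbit.
apply: connect_trans hc _; exact: (fconnect_iter fS 1 x).
Qed.

Lemma rotO : rot 1 Orb = map fS Orb.
Proof.
rewrite /Orb /orbit map_traject; move: (order_gt0 fS s0) (iter_order fS_inj s0).
case: (order fS s0) => // k _ hk.
by rewrite [in LHS]trajectS rot1_cons trajectSr -[iter k fS (fS s0)]iterSr hk.
Qed.

Lemma no_rev_O x y : x \in Orb -> y \in Orb -> fS y != sS x.
Proof.
move=> /inO[vx cx] /fS_O /inO[_ cy].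
have cxy : fconnect fS x (fS y).
  apply: connect_trans _ cy; by rewrite (fconnect_sym fS_inj).
by rewrite -(iter_findex cxy); exact: no_rev.
Qed.

Lemma trsO : trs (map fst Orb) = map (fun s => (s.1, (fS s).1)) Orb.
Proof. by rewrite /trs -map_rot rotO -map_comp zip_map. Qed.

Definition ell (v : V) (ii : 'I_3) x := if (sS x).1 == (v, ii) then sS x else fS x.

Lemma ell_inj v ii x y : x \in Orb -> y \in Orb -> ell v ii x = ell v ii y -> x = y.
Proof.
move=> xO yO; rewrite /ell; case: ifP => _; case: ifP => _.
- by move/(congr1 sS); rewrite !sSK.
- by move=> e; move: (no_rev_O xO yO); rewrite e eqxx.
- by move=> e; move: (no_rev_O yO xO); rewrite e eqxx.
- exact: fS_inj.
Qed.

Lemma memL (v : V) (ii : 'I_3) lo len (t : Slot) : t.1 = (v, ii) -> lo <= val t.2 < lo + len ->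
  t \in [seq ((v, ii), inord j) | j <- iota lo len].
Proof.
case: t => h j /= -> hj; apply/mapP; exists (val j); first by rewrite mem_iota.
by rewrite inord_val.
Qed.

Lemma dom_corner (v : V) (ii jj : 'I_3) (tgt : 'I_3) lo len :
  (forall x, x \in Orb -> cornerP v ii jj (x.1, (fS x).1) ->
     let t := ell v tgt x in t.1 = (v, tgt) /\ lo <= val t.2 < lo + len) ->
  U (map fst Orb) v ii jj <= len.
Proof.
move=> hx; rewrite /U trsO count_map.
apply: (@leq_trans (size [seq ((v, tgt), inord j) : Slot | j <- iota lo len])); last first.
  by rewrite size_map size_iota.
apply: (count_inj (l := ell v tgt)); first exact: orbit_uniq.
  by move=> x y xO yO _ _; exact: ell_inj.
by move=> x xO /= px; case: (hx x xO px) => h1 h2; exact: memL.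
Qed.

Lemma goodO : good (map fst Orb).
Proof.
split.
- by rewrite -size_eq0 size_map /Orb size_traject -lt0n order_gt0.
- rewrite trsO all_map; apply/allP => x xO /=.
  have va : vs (sS x) by rewrite vs_sS; case: (inO xO).
  case: (tau_props va) => _ _ h3 h4.
  by rewrite /valid /fS h3 eqxx /= eq_sym.
move=> v.
have key x : x \in Orb -> let a := sS x in
  [/\ vs a, (fS x).1 = ((tau a).1.1, (tau a).1.2), (tau a).1.1 = a.1.1 & a.1 = (a.1.1, a.1.2)].
  move=> xO /=; have va : vs (sS x) by rewrite vs_sS; case: (inO xO).
  case: (tau_props va) => _ _ h3 h4; split => //; exact: surjective_pairing.
split.
- apply: (@dom_corner v i0 i1 i0 0 (c01 v)) => x xO.
  case: (key x xO) => va e1 e2 e3.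
  case: (tau_ranges va) => r1 [r2 [r3 [r4 [r5 r6]]]].
  rewrite /cornerP /ell /fS /=.
  case/and3P => /eqP hv /eqP hv' /orP[/andP[/eqP c1 /eqP c2]|/andP[/eqP c1 /eqP c2]];
  rewrite -[sig x.1]/((sS x).1) in hv c1 *;
  rewrite e3 hv c1 xpair_eqE ?ineq10 ?ineq01 ?ineq20 ?ineq02 ?ineq12 ?ineq21 eqxx /=;
  rewrite hv c1 c2 ?ineq10 ?ineq01 ?ineq20 ?ineq02 ?ineq12 ?ineq21 !eqxx /= in r1 r2 r3 r4 r5 r6;
  (split; [ | lia]);
  first [by rewrite [(tau (sS x)).1]surjective_pairing hv' c2 | by rewrite -[sig x.1]/((sS x).1) e3 hv c1].
- apply: (@dom_corner v i0 i2 i0 (c01 v) (c02 v)) => x xO.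
  case: (key x xO) => va e1 e2 e3.
  case: (tau_ranges va) => r1 [r2 [r3 [r4 [r5 r6]]]].
  rewrite /cornerP /ell /fS /=.
  case/and3P => /eqP hv /eqP hv' /orP[/andP[/eqP c1 /eqP c2]|/andP[/eqP c1 /eqP c2]];
  rewrite -[sig x.1]/((sS x).1) in hv c1 *;
  rewrite e3 hv c1 xpair_eqE ?ineq10 ?ineq01 ?ineq20 ?ineq02 ?ineq12 ?ineq21 eqxx /=;
  rewrite hv c1 c2 ?ineq10 ?ineq01 ?ineq20 ?ineq02 ?ineq12 ?ineq21 !eqxx /= in r1 r2 r3 r4 r5 r6;
  (split; [ | lia]);
  first [by rewrite [(tau (sS x)).1]surjective_pairing hv' c2 | by rewrite -[sig x.1]/((sS x).1) e3 hv c1].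
- apply: (@dom_corner v i1 i2 i2 (c02 v) (c12 v)) => x xO.
  case: (key x xO) => va e1 e2 e3.
  case: (tau_ranges va) => r1 [r2 [r3 [r4 [r5 r6]]]].
  rewrite /cornerP /ell /fS /=.
  case/and3P => /eqP hv /eqP hv' /orP[/andP[/eqP c1 /eqP c2]|/andP[/eqP c1 /eqP c2]];
  rewrite -[sig x.1]/((sS x).1) in hv c1 *;
  rewrite e3 hv c1 xpair_eqE ?ineq10 ?ineq01 ?ineq20 ?ineq02 ?ineq12 ?ineq21 eqxx /=;
  rewrite hv c1 c2 ?ineq10 ?ineq01 ?ineq20 ?ineq02 ?ineq12 ?ineq21 !eqxx /= in r1 r2 r3 r4 r5 r6;
  (split; [ | lia]);
  first [by rewrite [(tau (sS x)).1]surjective_pairing hv' c2 | by rewrite -[sig x.1]/((sS x).1) e3 hv c1].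
Qed.
End Slots.
End Weights.
End Graph.

Lemma exists_good (G : trivalent_graph) (w : tg_E G -> nat) :
  BZ w -> (exists e, 0 < w e) -> exists W, good w W.
Proof.
move=> hB [e he]; case: (ed_surj e) => h eh.
pose s0 : Slot w := (h, inord 0).
have hs0 : vs s0 by rewrite /vs /= inordK // eh.
by exists (map fst (Orb s0)); exact: goodO.
Qed.

Unset Implicit Arguments.

Theorem mainTheorem14 (G : trivalent_graph) (w : tg_E G -> nat) :
  BZ w ->
  exists s : seq (tg_E G -> nat),
    all (fun u => BZ u && [forall e, u e <= 2]) s /\
    (forall e, w e = \sum_(u <- s) u e).
Proof.
have [n] := ubnP (\sum_e w e); elim: n w => // n IH w hsum hB.
case: (boolP [exists e, 0 < w e]) => [/existsP ex|/existsPn nex]; last first.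
  exists [::]; split => // e; rewrite big_nil.
  by move: (nex e); rewrite lt0n negbK => /eqP.
case: (exists_good hB ex) => W gW.
case: (good_small gW) => W' [gW' small].
case: (good_BZ hB gW') => bu bw le.
have [h hW'] : exists h, h \in W'.
  by case: gW' => ne _ _; case: W' ne {small bu bw le} => // h t _; exists h; rewrite mem_head.
have pos : 0 < uW W' (ed h) by rewrite /uW -has_count; apply/hasP; exists h.
have [s' [hs' es']] : exists s' : seq (tg_E G -> nat),
    all (fun u => BZ u && [forall e, u e <= 2]) s' /\
    (forall e, w e - uW W' e = \sum_(u <- s') u e).
  apply: (IH (fun e => w e - uW W' e)) => //.
  have : \sum_e w e = \sum_e (w e - uW W' e) + \sum_e uW W' e.
    by rewrite -big_split /=; apply: eq_bigr => e _; rewrite subnK.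
  have : uW W' (ed h) <= \sum_e uW W' e by exact: (leq_sum_pred _ _) || (rewrite (bigD1 (ed h)) //=; lia).
  lia.
exists (uW W' :: s'); split.
  by rewrite /= hs' andbT bu /=; apply/forallP.
by move=> e; rewrite big_cons -es' subnKC.
Qed.
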